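(* Consider the finite game with players $\mathcal{M}=\{1,\dots,M\}$, common action set $\mathcal{N}$ and costs $c_i(\mathbf{a}) = \frac{\sigma^2}{h_{ia_i}}\,\frac{\beta_i}{[1-\sum_{l\in\mathcal{M}_{a_i}(\mathbf{a})}\beta_l]^+}$, and suppose $h_{ij}=h$ for all $i\in\mathcal{M}$, $j\in\mathcal{N}$ (for a constant $h>0$) and $\beta_i=\beta$ for all $i\in\mathcal{M}$ (single class traffic). Then every Nash equilibrium of this game is system optimal, i.e., minimizes $C(\mathbf{a})=\sum_{i=1}^M c_i(\mathbf{a})$ over all $\mathbf{a}\in\mathcal{N}^M$.
   Context: Uplink cellular model: mobiles $\mathcal{M}=\{1,\dots,M\}$, BSs $\mathcal{N}=\{1,\dots,N\}$, power gains $h_{ij}>0$, noise power $\sigma^2>0$, target SINRs $\gamma_i>0$, $\beta_i=\gamma_i/(1+\gamma_i)$. Association profile $\mathbf{a}\in\mathcal{N}^M$, $\mathcal{M}_j(\mathbf{a})=\{l: a_l=j\}$, $[x]^+=\max(x,0)$, positive$/0=+\infty$; $(b,\mathbf{a}_{-i})$ replaces $a_i$ by $b$. $\mathbf{a}$ is a Nash equilibrium if $a_i\in\arg\min_{b\in\mathcal{N}}c_i(b,\mathbf{a}_{-i})$ for all $i$. Standing assumption: there exists at least one feasible association, i.e. some $\mathbf{a}$ with $\sum_{l\in\mathcal{M}_j(\mathbf{a})}\beta_l<1$ for all $j$. *)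

(* Defs.v *)
From mathcomp Require Import all_boot all_order all_algebra.
From mathcomp Require Import reals constructive_ereal.
Set Implicit Arguments. Unset Strict Implicit. Unset Printing Implicit Defensive.
Import Order.TTheory GRing.Theory Num.Theory.
Local Open Scope ring_scope.

Definition betaf (R : realType) (M : nat) (gamma : 'I_M -> R) (i : 'I_M) : R :=
  gamma i / (1 + gamma i).

Definition load (R : realType) (M N : nat) (beta : 'I_M -> R)
  (a : 'I_M -> 'I_N) (j : 'I_N) : R :=
  \sum_(l < M | a l == j) beta l.

Definition posp (R : realType) (x : R) : R := Num.max x 0.

Definition cost (R : realType) (M N : nat) (sigma2 : R) (h : 'I_M -> 'I_N -> R)
  (gamma : 'I_M -> R) (a : 'I_M -> 'I_N) (i : 'I_M) : \bar R :=
  let d := posp (1 - load (betaf gamma) a (a i)) in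
  if 0 < d then ((sigma2 / h i (a i)) * (betaf gamma i / d))%:E else +oo%E.

Definition upd (M N : nat) (a : 'I_M -> 'I_N) (i : 'I_M) (b : 'I_N) : 'I_M -> 'I_N :=
  fun l => if l == i then b else a l.

Definition is_NE (R : realType) (M N : nat) (sigma2 : R) (h : 'I_M -> 'I_N -> R)
  (gamma : 'I_M -> R) (a : 'I_M -> 'I_N) : Prop :=
  forall (i : 'I_M) (b : 'I_N),
    (cost sigma2 h gamma a i <= cost sigma2 h gamma (upd a i b) i)%E.

Definition social_cost (R : realType) (M N : nat) (sigma2 : R) (h : 'I_M -> 'I_N -> R)
  (gamma : 'I_M -> R) (a : 'I_M -> 'I_N) : \bar R :=
  (\sum_(i < M) cost sigma2 h gamma a i)%E.

Definition feasible (R : realType) (M N : nat) (gamma : 'I_M -> R)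
  (a : 'I_M -> 'I_N) : Prop :=
  forall j : 'I_N, load (betaf gamma) a j < 1.

(* Main.v *)
Require Import Defs.
From mathcomp Require Import all_boot all_order all_algebra.
From mathcomp Require Import reals constructive_ereal.
From mathcomp Require Import zify ring lra.
Set Implicit Arguments. Unset Strict Implicit. Unset Printing Implicit Defensive.
Import Order.TTheory GRing.Theory Num.Theory.
Local Open Scope ring_scope.

Definition cnt (M N : nat) (a : 'I_M -> 'I_N) (j : 'I_N) : nat :=
  (\sum_(l < M | a l == j) 1)%N.

Lemma load_cnt (R : realType) (M N : nat) (gamma : 'I_M -> R) (b0 : R)
  (a : 'I_M -> 'I_N) j :
  (forall i, betaf gamma i = b0) ->
  load (betaf gamma) a j = (cnt a j)%:R * b0.
Proof.
move=> hb; rewrite /load /cnt natr_sum mulr_suml.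
by apply: eq_bigr => i _; rewrite hb mul1r.
Qed.

Lemma sum_cnt (M N : nat) (a : 'I_M -> 'I_N) : (\sum_(j < N) cnt a j)%N = M.
Proof.
rewrite -[RHS]card_ord -sum1_card (partition_big a xpredT) //=.
Qed.

Lemma cnt_upd (M N : nat) (a : 'I_M -> 'I_N) i k :
  a i != k -> cnt (upd a i k) k = (cnt a k).+1.
Proof.
move=> hik; rewrite /cnt (bigD1 i) /=; last by rewrite /upd eqxx.
rewrite add1n; congr _.+1.
apply: eq_bigl => l; rewrite /upd.
by case: (l =P i) => [->|_]; rewrite ?eqxx ?andbF ?andbT ?(negbTE hik).
Qed.

Lemma cnt_occ (M N : nat) (a : 'I_M -> 'I_N) j :
  cnt a j = 0%N \/ exists i, a i = j.
Proof.
case: (pickP (fun l => a l == j)) => [i /eqP Hi|none]; first by right; exists i.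
by left; rewrite /cnt big_pred0.
Qed.

Definition Ff (R : realType) (b x : R) := x / (1 - x * b).

Lemma key (R : realType) (b q p m : R) : 0 < b -> m * b < 1 -> q * b < 1 ->
  p * b < 1 ->
  Ff b m - (Ff b q + (m - q) * (1 / ((1 - p * b) * (1 - q * b)))) =
  b * ((m - q) * (m - p)) / ((1 - m * b) * (1 - p * b) * (1 - q * b)).
Proof.
move=> hb hm hq hp; rewrite /Ff.
have h1 : 1 - m * b != 0 by rewrite subr_eq0 eq_sym lt_eqF.
have h2 : 1 - p * b != 0 by rewrite subr_eq0 eq_sym lt_eqF.
have h3 : 1 - q * b != 0 by rewrite subr_eq0 eq_sym lt_eqF.
by field; rewrite ?h1 ?h2 ?h3 ?mulf_neq0.
Qed.

Lemma costE (R : realType) (M N : nat) (sigma2 : R) (h : 'I_M -> 'I_N -> R)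
  (gamma : 'I_M -> R) (h0 b0 : R) (a : 'I_M -> 'I_N) i :
  (forall i j, h i j = h0) -> (forall i, betaf gamma i = b0) ->
  cost sigma2 h gamma a i =
  if (cnt a (a i))%:R * b0 < 1
  then ((sigma2 / h0 * b0) / (1 - (cnt a (a i))%:R * b0))%:E else +oo%E.
Proof.
move=> hh hb; rewrite /cost (load_cnt _ _ hb) hh hb /posp.
set x := 1 - _.
have -> : (0 < Num.max x 0) = ((cnt a (a i))%:R * b0 < 1).
  by rewrite lt_max ltxx orbF /x subr_gt0.
case: ifPn => // H.
have -> : Num.max x 0 = x by apply/max_idPl; rewrite /x subr_ge0 ltW.
by rewrite mulrA.
Qed.

Lemma cost_ge0 (R : realType) (M N : nat) (sigma2 : R) (h : 'I_M -> 'I_N -> R)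
  (gamma : 'I_M -> R) (h0 b0 : R) (a : 'I_M -> 'I_N) i :
  0 < sigma2 -> 0 < h0 -> 0 < b0 ->
  (forall i j, h i j = h0) -> (forall i, betaf gamma i = b0) ->
  (0 <= cost sigma2 h gamma a i)%E.
Proof.
move=> hs hh0 hb0 hh hb; rewrite (costE _ _ _ hh hb); case: ifPn => H; last exact: leey.
rewrite lee_fin; apply: divr_ge0; first by rewrite mulr_ge0 ?divr_ge0 ?ltW.
by rewrite subr_ge0; apply: ltW.
Qed.

Lemma social_fin (R : realType) (M N : nat) (sigma2 : R) (h : 'I_M -> 'I_N -> R)
  (gamma : 'I_M -> R) (h0 b0 : R) (a : 'I_M -> 'I_N) :
  (forall i j, h i j = h0) -> (forall i, betaf gamma i = b0) ->
  (forall j, (cnt a j)%:R * b0 < 1) ->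
  social_cost sigma2 h gamma a =
  ((sigma2 / h0 * b0) * \sum_(j < N) Ff b0 (cnt a j)%:R)%:E.
Proof.
move=> hh hb hf; rewrite /social_cost.
rewrite (eq_bigr (fun i => ((sigma2 / h0 * b0) / (1 - (cnt a (a i))%:R * b0))%:E));
  last by move=> i _; rewrite (costE _ _ _ hh hb) hf.
rewrite sumEFin; congr (_%:E).
rewrite (partition_big a xpredT) //= mulr_sumr; apply: eq_bigr => j _.
rewrite (eq_bigr (fun=> (sigma2 / h0 * b0) / (1 - (cnt a j)%:R * b0)));
  last by move=> i /= /eqP->.
rewrite -[X in \sum_(_ | _) X]mul1r -mulr_suml.
have -> : \sum_(i | a i == j) (1:R) = (cnt a j)%:R by rewrite /cnt natr_sum.
by rewrite /Ff mulrCA.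
Qed.

Lemma social_inf (R : realType) (M N : nat) (sigma2 : R) (h : 'I_M -> 'I_N -> R)
  (gamma : 'I_M -> R) (h0 b0 : R) (a : 'I_M -> 'I_N) j :
  0 < sigma2 -> 0 < h0 -> 0 < b0 ->
  (forall i j, h i j = h0) -> (forall i, betaf gamma i = b0) ->
  ~~ ((cnt a j)%:R * b0 < 1) ->
  social_cost sigma2 h gamma a = +oo%E.
Proof.
move=> hs hh0 hb0 hh hb hj.
case: (cnt_occ a j) => [H0|[i Hi]]; first by move: hj; rewrite H0 mul0r ltr01.
rewrite /social_cost (bigD1 i) //= (costE _ _ _ hh hb) Hi (negbTE hj) addye //.
rewrite gt_eqF // (@lt_le_trans _ _ 0%E) ?ltNye //.
apply: (big_ind (fun x : \bar R => (0 <= x)%E)) => //; first by move=> x y; apply: adde_ge0.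
by move=> l _; apply: (@cost_ge0 _ _ _ _ _ _ _ _ a l hs hh0 hb0 hh hb).
Qed.

Theorem proposition6 (R : realType) (M N : nat) (sigma2 : R)
  (h : 'I_M -> 'I_N -> R) (gamma : 'I_M -> R) (h0 b0 : R) :
  0 < sigma2 ->
  (forall i j, 0 < h i j) ->
  (forall i, 0 < gamma i) ->
  (exists a : 'I_M -> 'I_N, feasible gamma a) ->
  0 < h0 ->
  (forall i j, h i j = h0) ->
  (forall i, betaf gamma i = b0) ->
  forall a : 'I_M -> 'I_N, is_NE sigma2 h gamma a ->
  forall a' : 'I_M -> 'I_N,
    (social_cost sigma2 h gamma a <= social_cost sigma2 h gamma a')%E.
Proof.
move=> hs hpos hg [af Haf] hh0 hhE hb a Hne a'.
destruct M as [|M]; first by rewrite /social_cost !big_ord0.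
pose i0 : 'I_M.+1 := ord0.
have hb0 : 0 < b0 by rewrite -(hb i0) /betaf divr_gt0 // addr_gt0.
have Hf : forall k, (cnt af k)%:R * b0 < 1.
  by move=> k; rewrite -(load_cnt _ _ hb); exact: Haf.
have Hocc : forall i, (cnt a (a i))%:R * b0 < 1.
  move=> i; rewrite ltNge; apply/negP => Hj.
  have Hk : forall k, k != a i -> 1 <= (cnt a k).+1%:R * b0.
    move=> k hk; have := Hne i k.
    rewrite !(costE _ _ _ hhE hb).
    have -> : upd a i k i = k by rewrite /upd eqxx.
    rewrite cnt_upd 1?eq_sym // ltNge Hj /=.
    case: ifPn => [_|]; first by rewrite leye_eq.
    by rewrite -leNgt.
  have h1 : (cnt af (a i) < cnt a (a i))%N.
    rewrite -(ltr_nat R) -(ltr_pM2r hb0); exact: lt_le_trans (Hf _) Hj.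
  have h2 : (\sum_(j | j != a i) cnt af j <= \sum_(j | j != a i) cnt a j)%N.
    apply: leq_sum => k hk.
    rewrite -ltnS -(ltr_nat R) -(ltr_pM2r hb0); exact: lt_le_trans (Hf k) (Hk k hk).
  have e1 := sum_cnt af; have e2 := sum_cnt a.
  rewrite (bigD1 (a i)) //= in e1; rewrite (bigD1 (a i)) //= in e2.
  by have := leq_add h1 h2; rewrite addSn e1 e2 ltnn.
have Hfeas : forall j, (cnt a j)%:R * b0 < 1.
  move=> j; case: (cnt_occ a j) => [->|[i <-]]; [by rewrite mul0r ltr01 | exact: Hocc].
have Hbal : forall j k, (cnt a j <= (cnt a k).+1)%N.
  move=> j k; case: (cnt_occ a j) => [->//|[i Hi]].
  case: (eqVneq k j) => [->|hk]; first exact: leqnSn.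
  have := Hne i k; rewrite !(costE _ _ _ hhE hb).
  have -> : upd a i k i = k by rewrite /upd eqxx.
  rewrite cnt_upd; last by rewrite Hi eq_sym.
  have Hi' := Hocc i; rewrite Hi in Hi' *; rewrite Hi'.
  rewrite -(ler_nat R) -(ler_pM2r hb0).
  case: ifPn => Hk.
  - rewrite lee_fin ler_pM2l; last by rewrite !mulr_gt0 ?invr_gt0.
    rewrite lef_pV2 ?posrE ?subr_gt0 //.
    lra.
  - move=> _; move: Hk; rewrite -leNgt => Hk.
    apply: ltW; exact: lt_le_trans Hi' Hk.
case: (@arg_minnP _ (a i0) xpredT (cnt a) isT) => jm _ Hmin.
set q := cnt a jm.
have Hq : forall j, cnt a j = q \/ cnt a j = q.+1.
  move=> j; have := Hmin j isT; have := Hbal j jm; rewrite -/q; lia.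
have Hqf : q%:R * b0 < 1 := Hfeas jm.
pose p : R := if [exists j, cnt a j == q.+1] then q.+1%:R else q%:R - 1.
have Hpf : p * b0 < 1.
  rewrite /p; case: ifP => [H|_].
    case/fintype.existsP: H => j /eqP Hj; rewrite -Hj; exact: Hfeas.
  rewrite mulrBl mul1r; lra.
have Hpeq : forall j, (cnt a j)%:R = q%:R :> R \/ (cnt a j)%:R = p.
  move=> j; case: (Hq j) => Hj; rewrite Hj; first by left.
  right; rewrite /p; case: ifP => // Hn; exfalso.
  have : [exists j0, cnt a j0 == q.+1] by apply/fintype.existsP; exists j; rewrite Hj.
  by rewrite Hn.
have Hpint : forall m : nat, 0 <= (m%:R - q%:R) * (m%:R - p).
  move=> m; rewrite /p; case: ifP => _.
  - case: (leqP m q) => hm.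
    + have : m%:R <= q%:R :> R by rewrite ler_nat.
      rewrite -natr1 => H; apply: mulr_le0; lra.
    + have : q.+1%:R <= m%:R :> R by rewrite ler_nat.
      rewrite -natr1 => H; apply: mulr_ge0; lra.
  - case: (leqP q m) => hm.
    + have : q%:R <= m%:R :> R by rewrite ler_nat.
      move=> H; apply: mulr_ge0; lra.
    + have : m.+1%:R <= q%:R :> R by rewrite ler_nat.
      rewrite -natr1 => H; apply: mulr_le0; lra.
have hK : 0 < sigma2 / h0 * b0 by rewrite !mulr_gt0 ?invr_gt0.
case: (boolP [forall j, (cnt a' j)%:R * b0 < 1]) => [/forallP Hf'|]; last first.
  by rewrite negb_forall => /fintype.existsP[j Hj]; rewrite (social_inf hs hh0 hb0 hhE hb Hj) leey.
rewrite (social_fin sigma2 hhE hb Hfeas) (social_fin sigma2 hhE hb Hf') lee_fin ler_pM2l //.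
set s := 1 / ((1 - p * b0) * (1 - q%:R * b0)).
rewrite (_ : \sum_j Ff b0 (cnt a j)%:R = \sum_j (Ff b0 q%:R + ((cnt a' j)%:R - q%:R) * s)); last first.
  transitivity (\sum_j (Ff b0 q%:R + ((cnt a j)%:R - q%:R) * s)).
    apply: eq_bigr => j _; apply/eqP; rewrite -subr_eq0 key //.
    by case: (Hpeq j) => ->; rewrite ?subrr ?mul0r ?mulr0 ?mul0r.
  rewrite !big_split /= -!mulr_suml !sumrB -!natr_sum !sum_cnt //.
apply: ler_sum => j _; rewrite -subr_ge0 key //.
have d1 : 0 < 1 - (cnt a' j)%:R * b0 by rewrite subr_gt0.
have d2 : 0 < 1 - p * b0 by rewrite subr_gt0.
have d3 : 0 < 1 - q%:R * b0 by rewrite subr_gt0.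
apply: divr_ge0; first by apply: mulr_ge0; [exact: ltW | exact: Hpint].
by apply: ltW; rewrite !mulr_gt0.
Qed.
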